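(* Let $\varphi:\Lambda\to\Gamma$ be a regular covering map of finite simplicial graphs. For every vertex $v$ of $\Gamma$ and every connected component $B$ of $\Gamma\setminus\mathrm{st}(v)$, the partial conjugation $P^v_{\bar B}$ is liftable.
   Context: Graphs are finite simplicial graphs; subgraphs are induced. $A_\Gamma$ is the right-angled Artin group with generators $V\Gamma$ and relations $[u,w]=1$ for edges. $\mathrm{lk}(v)$ is induced by the neighbours of $v$, $\mathrm{st}(v)$ by $\mathrm{lk}(v)\cup\{v\}$. A covering map $\varphi:\Lambda\to\Gamma$ is a surjective simplicial map mapping the neighbours of each vertex $u$ bijectively onto the neighbours of $\varphi(u)$; regular means the group of graph automorphisms $\mu$ of $\Lambda$ with $\varphi\mu=\varphi$ acts transitively on each fiber. $\phi:A_\Lambda\to A_\Gamma$ is induced by $\varphi$; $f\in\mathrm{Aut}(A_\Gamma)$ is liftable if there is $F\in\mathrm{Aut}(A_\Lambda)$ with $f\circ\phi=\phi\circ F$. For a union $C$ of components of $\Gamma\setminus\mathrm{st}(v)$, $P^v_C$ sends each vertex $w$ of $C$ to $vwv^{-1}$ and fixes other vertices. For a vertex $u$ of $\Lambda$ and a connected subgraph $A$ of $\Lambda$ disjoint from $\mathrm{st}(u)$, $C(u,A)$ is the component of $\Lambda\setminus\mathrm{st}(u)$ containing $A$. For a component $B$ of $\Gamma\setminus\mathrm{st}(v)$, pick a component $\tilde B$ of $\varphi^{-1}(B)$ and set $\bar B=\varphi\big(\bigcap_{u\in\varphi^{-1}(v)}C(u,\tilde B)\big)$; this is independent of the choice of $\tilde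 B$ and is a union of components of $\Gamma\setminus\mathrm{st}(v)$ containing $B$. *)

(* Defs.v *)
From mathcomp Require Import all_boot.
From Stdlib Require Import Relation_Operators.
Set Implicit Arguments. Unset Strict Implicit. Unset Printing Implicit Defensive.

Definition simple_graph (T : finType) (e : rel T) : Prop := symmetric e /\ irreflexive e.

Definition star (T : finType) (e : rel T) (v : T) : {set T} := v |: [set w | e v w].

(* connected component of x in the subgraph induced by S (assumes x \in S) *)
Definition icomp (T : finType) (e : rel T) (S : {set T}) (x : T) : {set T} :=
  [set y in S | connect [rel a b | [&& e a b, a \in S & b \in S]] x y].

(* A word is a list of letters (generator, inverted?). *)
Definition word (T : Type) := seq (T * bool).
Definition letter (T : Type) (x : T) : word T := [:: (x, false)].
Definition winv (T : Type) (w : word T) : word T := rev (map (fun p => (p.1, ~~ p.2)) w).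

Inductive rstep (T : Type) (e : rel T) : word T -> word T -> Prop :=
| rstep_cancel s1 s2 x b : rstep e (s1 ++ (x, b) :: (x, ~~ b) :: s2) (s1 ++ s2)
| rstep_comm s1 s2 x y b c : e x y ->
    rstep e (s1 ++ (x, b) :: (y, c) :: s2) (s1 ++ (y, c) :: (x, b) :: s2).

Definition weq (T : Type) (e : rel T) : word T -> word T -> Prop :=
  clos_refl_sym_trans (word T) (rstep e).

Definition wsubst (T S : Type) (g : T -> word S) (w : word T) : word S :=
  flatten (map (fun p => if p.2 then winv (g p.1) else g p.1) w).

(* g : V(Gamma) -> A_Delta defines a homomorphism A_Gamma -> A_Delta *)
Definition is_hom (T S : Type) (e : rel T) (e' : rel S) (g : T -> word S) : Prop :=
  forall x y, e x y -> weq e' (g x ++ g y) (g y ++ g x).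

Definition is_aut (T : Type) (e : rel T) (g : T -> word T) : Prop :=
  is_hom e e g /\
  exists h : T -> word T, is_hom e e h /\
    (forall x, weq e (wsubst g (h x)) (letter x)) /\
    (forall x, weq e (wsubst h (g x)) (letter x)).

Definition is_covering (L G : finType) (eL : rel L) (eG : rel G) (phi : L -> G) : Prop :=
  [/\ forall y, exists x, phi x = y,
      forall u w, eL u w -> eG (phi u) (phi w),
      forall u, {in [pred w | eL u w] &, injective phi}
    & forall u y, eG (phi u) y -> exists w, eL u w /\ phi w = y].

Definition is_regular_covering (L G : finType) (eL : rel L) (eG : rel G) (phi : L -> G) : Prop :=
  is_covering eL eG phi /\
  forall u u', phi u = phi u' ->
    exists mu : L -> L, [/\ bijective mu, forall a b, eL (mu a) (mu b) = eL a b,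
                           forall a, phi (mu a) = phi a & mu u = u'].

Definition liftable (L G : finType) (eL : rel L) (eG : rel G) (phi : L -> G)
  (f : G -> word G) : Prop :=
  exists F : L -> word L, is_aut eL F /\
    forall x, weq eG (f (phi x)) (wsubst (fun z => letter (phi z)) (F x)).

Definition pconj (T : finType) (v : T) (C : {set T}) : T -> word T :=
  fun w => if w \in C then [:: (v, false); (w, false); (v, true)] else letter w.

(* \bar B, where B~ is the component of phi^{-1}(B) containing x *)
Definition barB (L G : finType) (eL : rel L) (phi : L -> G) (v : G) (x : L) : {set G} :=
  phi @: [set y | [forall u, (phi u == v) ==> (y \in icomp eL (~: star eL u) x)]].

(* Main.v *)
Require Import Defs.
From mathcomp Require Import all_boot zify.
From Stdlib Require Import Relation_Operators.
Set Implicit Arguments. Unset Strict Implicit. Unset Printing Implicit Defensive.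


Section Words.
Variables (T : Type) (e : rel T).

Lemma weq_refl w : weq e w w. Proof. exact: rst_refl. Qed.
Lemma weq_sym w w' : weq e w w' -> weq e w' w. Proof. exact: rst_sym. Qed.
Lemma weq_trans w1 w2 w3 : weq e w1 w2 -> weq e w2 w3 -> weq e w1 w3.
Proof. exact: rst_trans. Qed.
Lemma weq_step w w' : rstep e w w' -> weq e w w'. Proof. exact: rst_step. Qed.

Lemma rstep_ctx s t w w' : rstep e w w' -> rstep e (s ++ w ++ t) (s ++ w' ++ t).
Proof.
case=> [s1 s2 x b|s1 s2 x y b c exy].
  have -> : s ++ (s1 ++ [:: (x, b), (x, ~~ b) & s2]) ++ t =
            (s ++ s1) ++ [:: (x, b), (x, ~~ b) & s2 ++ t] by rewrite -!catA.
  have -> : s ++ (s1 ++ s2) ++ t = (s ++ s1) ++ (s2 ++ t) by rewrite -!catA.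
  exact: rstep_cancel.
have -> : s ++ (s1 ++ [:: (x, b), (y, c) & s2]) ++ t =
          (s ++ s1) ++ [:: (x, b), (y, c) & s2 ++ t] by rewrite -!catA.
have -> : s ++ (s1 ++ [:: (y, c), (x, b) & s2]) ++ t =
          (s ++ s1) ++ [:: (y, c), (x, b) & s2 ++ t] by rewrite -!catA.
exact: rstep_comm.
Qed.

Lemma weq_ctx s t w w' : weq e w w' -> weq e (s ++ w ++ t) (s ++ w' ++ t).
Proof.
elim=> [a b H|a|a b _ IH|a b c _ IH1 _ IH2].
- exact/weq_step/rstep_ctx.
- exact: weq_refl.
- exact: weq_sym.
- exact: weq_trans IH1 IH2.
Qed.

Lemma weq_cat a a' b b' : weq e a a' -> weq e b b' -> weq e (a ++ b) (a' ++ b').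
Proof.
move=> Ha Hb; apply: (@weq_trans _ (a' ++ b)).
  by have := weq_ctx [::] b Ha.
by have := weq_ctx a' [::] Hb; rewrite /= !cats0.
Qed.

Lemma winv_cat (a b : word T) : winv (a ++ b) = winv b ++ winv a.
Proof. by rewrite /winv map_cat rev_cat. Qed.

Lemma winv_cons (x : T * bool) (w : word T) : winv (x :: w) = winv w ++ [:: (x.1, ~~ x.2)].
Proof. by rewrite /winv /= rev_cons cats1. Qed.

Lemma winvK (w : word T) : winv (winv w) = w.
Proof.
rewrite /winv map_rev revK -map_comp.
by elim: w => //= [[x b] w ->] /=; rewrite negbK.
Qed.

Lemma winv_nil : winv [::] = ([::] : word T). Proof. by []. Qed.

Hypothesis esym : symmetric e.

Lemma rstep_winv w w' : rstep e w w' -> rstep e (winv w) (winv w').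
Proof.
case=> [s1 s2 x b|s1 s2 x y b c exy].
  rewrite !winv_cat !winv_cons /= -!catA /= negbK.
  exact: rstep_cancel.
rewrite !winv_cat !winv_cons /= -!catA /=.
by apply: rstep_comm; rewrite esym.
Qed.

Lemma weq_winv w w' : weq e w w' -> weq e (winv w) (winv w').
Proof.
elim=> [a b H|a|a b _ IH|a b c _ IH1 _ IH2].
- exact/weq_step/rstep_winv.
- exact: weq_refl.
- exact: weq_sym.
- exact: weq_trans IH1 IH2.
Qed.

End Words.


Section Words2.
Variables (T : Type) (e : rel T).

Lemma weq_inv_r (w : word T) : weq e (w ++ winv w) [::].
Proof.
elim: w => [|x w IH]; first exact: weq_refl.
rewrite winv_cons.
have -> : (x :: w) ++ winv w ++ [:: (x.1, ~~ x.2)] =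
          [:: x] ++ (w ++ winv w) ++ [:: (x.1, ~~ x.2)] by rewrite /= catA.
apply: weq_trans (weq_ctx _ _ IH) _ => /=.
case: x => x b /=; apply: weq_step.
by have := @rstep_cancel _ e [::] [::] x b.
Qed.

Lemma weq_inv_l (w : word T) : weq e (winv w ++ w) [::].
Proof. by have := weq_inv_r (winv w); rewrite winvK. Qed.

Definition wcomm (w1 w2 : word T) := weq e (w1 ++ w2) (w2 ++ w1).

Lemma wcomm_sym w1 w2 : wcomm w1 w2 -> wcomm w2 w1.
Proof. exact: weq_sym. Qed.

Lemma wcomm_invl w1 w2 : wcomm w1 w2 -> wcomm (winv w1) w2.
Proof.
move=> H; rewrite /wcomm.
apply: (weq_trans (w2 := winv w1 ++ w2 ++ (w1 ++ winv w1))).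
  have := weq_ctx (winv w1 ++ w2) [::] (weq_sym (weq_inv_r w1)).
  by rewrite /= !cats0 -!catA.
apply: (weq_trans (w2 := winv w1 ++ (w1 ++ w2) ++ winv w1)).
  have := weq_ctx (winv w1) (winv w1) (weq_sym H); by rewrite -!catA.
apply: (weq_trans (w2 := [::] ++ w2 ++ winv w1)); last exact: weq_refl.
by have := weq_ctx [::] (w2 ++ winv w1) (weq_inv_l w1); rewrite /= -!catA.
Qed.

Lemma wcomm_sign (w1 w2 : word T) (b c : bool) : wcomm w1 w2 ->
  wcomm (if b then winv w1 else w1) (if c then winv w2 else w2).
Proof.
move=> H.
have H1 : wcomm (if b then winv w1 else w1) w2 by case: b => //; apply: wcomm_invl.
case: c => //; apply/wcomm_sym/wcomm_invl/wcomm_sym/H1.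
Qed.

End Words2.

Section Subst.
Variables (T S : Type).

Lemma wsubst_cat (g : T -> word S) a b : wsubst g (a ++ b) = wsubst g a ++ wsubst g b.
Proof. by rewrite /wsubst map_cat flatten_cat. Qed.

Lemma wsubst_cons (g : T -> word S) x b w :
  wsubst g ((x, b) :: w) = (if b then winv (g x) else g x) ++ wsubst g w.
Proof. by []. Qed.

Lemma wsubst_winv (g : T -> word S) w : wsubst g (winv w) = winv (wsubst g w).
Proof.
elim: w => [|[x b] w IH] //.
rewrite winv_cons wsubst_cat IH wsubst_cons winv_cat /= cats0.
by case: b => //=; rewrite winvK.
Qed.

Lemma wsubst_letter (w : word T) : wsubst (fun z => letter z) w = w.
Proof.
elim: w => [|[x b] w IH] //.
move: IH; rewrite /wsubst /= => ->; by case: b.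
Qed.

Lemma wsubst_pt (e' : rel S) (g g' : T -> word S) w : symmetric e' ->
  (forall z, weq e' (g z) (g' z)) -> weq e' (wsubst g w) (wsubst g' w).
Proof.
move=> es H; elim: w => [|[x b] w IH]; first exact: weq_refl.
rewrite !wsubst_cons; apply: weq_cat => //.
by case: b; [apply: weq_winv|].
Qed.

Lemma wsubst_hom (e : rel T) (e' : rel S) (g : T -> word S) w w' :
  is_hom e e' g -> weq e w w' -> weq e' (wsubst g w) (wsubst g w').
Proof.
move=> hg; elim=> [a c H|a|a c _ IH|a c d _ IH1 _ IH2].
- case: H => [s1 s2 x b|s1 s2 x y b c' exy].
    rewrite !wsubst_cat !wsubst_cons.
    have -> : wsubst g s1 ++ (if b then winv (g x) else g x) ++
       (if ~~ b then winv (g x) else g x) ++ wsubst g s2 =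
       wsubst g s1 ++ ((if b then winv (g x) else g x) ++
       (if ~~ b then winv (g x) else g x)) ++ wsubst g s2 by rewrite !catA.
    have -> : wsubst g s1 ++ wsubst g s2 = wsubst g s1 ++ [::] ++ wsubst g s2 by [].
    apply: weq_ctx; case: b => /=; [exact: weq_inv_l|exact: weq_inv_r].
  rewrite !wsubst_cat !wsubst_cons !catA.
  rewrite -!(catA (wsubst g s1)).
  apply: weq_ctx; exact: (wcomm_sign b c' (hg _ _ exy)).
- exact: weq_refl.
- exact: weq_sym.
- exact: weq_trans IH1 IH2.
Qed.

End Subst.

Lemma wsubst_comp (A B C : Type) (g : B -> word C) (h : A -> word B) w :
  wsubst g (wsubst h w) = wsubst (fun z => wsubst g (h z)) w.
Proof.
elim: w => [|[x b] w IH] //.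
rewrite !wsubst_cons wsubst_cat IH; congr (_ ++ _).
by case: b => //; rewrite wsubst_winv.
Qed.

Section Aut.
Variables (T : Type) (e : rel T).
Hypothesis esym : symmetric e.

Lemma is_hom_comp (g h : T -> word T) : is_hom e e g -> is_hom e e h ->
  is_hom e e (fun y => wsubst g (h y)).
Proof.
move=> hg hh x y exy; rewrite -!wsubst_cat; apply: wsubst_hom hg _.
exact: hh.
Qed.

Lemma is_aut_comp (g h : T -> word T) : is_aut e g -> is_aut e h ->
  is_aut e (fun y => wsubst g (h y)).
Proof.
move=> [hg [g' [hg' [gg' g'g]]]] [hh [h' [hh' [hh'' h'h]]]].
split; first exact: is_hom_comp.
exists (fun y => wsubst h' (g' y)); split; first exact: is_hom_comp.
split=> x.
- rewrite -(wsubst_comp g h).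
  apply: weq_trans (gg' x).
  apply: wsubst_hom hg _.
  rewrite wsubst_comp.
  apply: weq_trans (wsubst_pt _ esym hh'') _.
  rewrite wsubst_letter; exact: weq_refl.
- rewrite -(wsubst_comp h' g').
  apply: weq_trans (h'h x).
  apply: wsubst_hom hh' _.
  rewrite wsubst_comp.
  apply: weq_trans (wsubst_pt _ esym g'g) _.
  rewrite wsubst_letter; exact: weq_refl.
Qed.

Lemma is_aut_letter : is_aut e (fun z => letter z).
Proof.
have hl : is_hom e e (fun z => letter z).
  move=> x y exy; apply: weq_step.
  by have := @rstep_comm _ e [::] [::] x y false false exy.
split=> //; exists (fun z => letter z); split=> //; split=> x; exact: weq_refl.
Qed.

End Aut.


Section Steps.
Variables (T : Type) (e : rel T).
Lemma weq_cancel_mid s1 s2 x b : weq e (s1 ++ (x, b) :: (x, ~~ b) :: s2) (s1 ++ s2).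
Proof. exact/weq_step/rstep_cancel. Qed.
Lemma weq_comm_mid s1 s2 x y b c : e x y ->
  weq e (s1 ++ (x, b) :: (y, c) :: s2) (s1 ++ (y, c) :: (x, b) :: s2).
Proof. by move=> exy; apply/weq_step/rstep_comm. Qed.
End Steps.
Arguments weq_cancel_mid {T e}.
Arguments weq_comm_mid {T e} s1 s2 {x y} b c.

Definition pc (L : finType) (u : L) (E : {set L}) (s : bool) : L -> word L :=
  fun y => if y \in E then [:: (u, s); (y, false); (u, ~~ s)] else letter y.

Section PC.
Variables (L : finType) (e : rel L).
Hypothesis esym : symmetric e.
Hypothesis eirr : irreflexive e.
Variables (u : L) (E : {set L}).
Hypothesis Eout : forall a, a \in E -> a \notin star e u.
Hypothesis Ecl : forall a b, a \in E -> e a b -> b \notin E -> b \in star e u.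

Lemma pc_mixed s a b : a \in E -> b \notin E -> e a b ->
  weq e (pc u E s a ++ pc u E s b) (pc u E s b ++ pc u E s a).
Proof.
move=> aE bE eab; rewrite /pc aE (negbTE bE) /letter /=.
have ub : e u b.
  have := Ecl aE eab bE; rewrite /star !inE; case/orP=> // /eqP bu.
  by move: (Eout aE); rewrite /star !inE -bu esym eab orbT.
apply: weq_trans (weq_comm_mid [:: (u, s); (a, false)] [::] (~~ s) false ub) _.
apply: weq_trans (weq_comm_mid [:: (u, s)] [:: (u, ~~ s)] false false eab) _.
exact: (weq_comm_mid [::] [:: (a, false); (u, ~~ s)] s false ub).
Qed.

Lemma pc_hom s : is_hom e e (pc u E s).
Proof.
move=> a b eab.
case aE: (a \in E); case bE: (b \in E).
- rewrite /pc aE bE /letter /=.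
  have H1 := weq_cancel_mid (e:=e) [:: (u, s); (a, false)] [:: (b, false); (u, ~~ s)] u (~~ s).
  rewrite negbK /= in H1.
  have H2 := weq_cancel_mid (e:=e) [:: (u, s); (b, false)] [:: (a, false); (u, ~~ s)] u (~~ s).
  rewrite negbK /= in H2.
  apply: weq_trans H1 _; apply: weq_trans _ (weq_sym H2).
  exact: (weq_comm_mid [:: (u, s)] [:: (u, ~~ s)] false false eab).
- by apply: pc_mixed; rewrite ?aE ?bE.
- apply: weq_sym; apply: pc_mixed; rewrite ?aE ?bE //; by rewrite esym.
- rewrite /pc aE bE /letter /=.
  exact: (weq_comm_mid [::] [::] false false eab).
Qed.

Lemma pc_inv s y : weq e (wsubst (pc u E (~~ s)) (pc u E s y)) (letter y).
Proof.
have uE : u \notin E.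
  by apply/negP=> /Eout; rewrite /star !inE eqxx.
rewrite /pc; case yE: (y \in E); last first.
  by rewrite /wsubst /= yE cats0; exact: weq_refl.
rewrite /wsubst /= (negbTE uE) yE /=.
case: s => /=.
- have H1 := weq_cancel_mid (e:=e) [::] [:: (y, false); (u, true); (u, false)] u true.
  apply: weq_trans H1 _ => /=.
  exact: (weq_cancel_mid [:: (y, false)] [::] u true).
- have H1 := weq_cancel_mid (e:=e) [::] [:: (y, false); (u, false); (u, true)] u false.
  apply: weq_trans H1 _ => /=.
  exact: (weq_cancel_mid [:: (y, false)] [::] u false).
Qed.

Lemma pc_aut s : is_aut e (pc u E s).
Proof.
split; first exact: pc_hom.
exists (pc u E (~~ s)); split; first exact: pc_hom.
split=> x.
- have := pc_inv (~~ s) x; by rewrite negbK.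
- exact: pc_inv.
Qed.
End PC.


Section Comp.
Variables (L G : finType) (eL : rel L) (eG : rel G) (phi : L -> G) (v : G).
Hypothesis eLsym : symmetric eL.
Hypothesis eLirr : irreflexive eL.
Hypothesis eGsym : symmetric eG.

Fixpoint Fcomp (l : seq (L * {set L} * bool)) : L -> word L :=
  match l with
  | [::] => fun z => letter z
  | c :: l' => fun y => wsubst (Fcomp l') (pc c.1.1 c.1.2 c.2 y)
  end.

Definition valid (c : L * {set L} * bool) :=
  [/\ phi c.1.1 = v, forall a, a \in c.1.2 -> a \notin star eL c.1.1
    & forall a b, a \in c.1.2 -> eL a b -> b \notin c.1.2 -> b \in star eL c.1.1].

Lemma Fcomp_aut l : (forall c, c \in l -> valid c) -> is_aut eL (Fcomp l).
Proof.
elim: l => [|c l IH] H /=; first exact: is_aut_letter.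
apply: is_aut_comp => //.
  by apply: IH => c' Hc'; apply: H; rewrite inE Hc' orbT.
have [_ H2 H3] := H c (mem_head _ _).
exact: pc_aut.
Qed.

Definition Phi (w : word L) : word G := wsubst (fun z => letter (phi z)) w.

Definition pref (l : seq (L * {set L} * bool)) (y : L) : word G :=
  map (fun c : L * {set L} * bool => (v, c.2))
    (filter (fun c : L * {set L} * bool => y \in c.1.2) l).

Lemma vconj (p : word G) a : all (fun q => q.1 == v) p -> (a = v \/ eG v a) ->
  weq eG (p ++ letter a ++ winv p) (letter a).
Proof.
move=> Hp Ha; elim: p Hp => [|[x b] p IH] /=; first by move=> _; rewrite winv_nil; exact: weq_refl.
case/andP=> /eqP -> {x} /IH Hp.
rewrite winv_cons.
have -> : (v, b) :: p ++ letter a ++ winv p ++ [:: ((v, b).1, ~~ (v, b).2)] =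
  [:: (v, b)] ++ (p ++ letter a ++ winv p) ++ [:: (v, ~~ b)] by rewrite /= -!catA.
apply: weq_trans (weq_ctx _ _ Hp) _; rewrite /letter /=.
case: Ha => [->|eva].
  case: b.
    exact: (weq_cancel_mid [::] [:: (v, false)] v true).
  exact: (weq_cancel_mid [:: (v, false)] [::] v false).
have eav : eG a v by rewrite eGsym.
apply: weq_trans (weq_comm_mid [:: (v, b)] [::] false (~~ b) eav) _.
exact: (weq_cancel_mid [::] [:: (a, false)] v b).
Qed.

Lemma all_pref l y : all (fun q => q.1 == v) (pref l y).
Proof. by rewrite /pref all_map; apply/allP => c _ /=. Qed.

Lemma Fcomp_img l : (forall c, c \in l -> phi c.1.1 = v) -> forall y,
  weq eG (Phi (Fcomp l y)) (pref l y ++ letter (phi y) ++ winv (pref l y)).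
Proof.
elim: l => [|c l IH] H y /=.
  rewrite /Phi /wsubst /= ?winv_nil; exact: weq_refl.
have IH' : forall y, weq eG (Phi (Fcomp l y)) (pref l y ++ letter (phi y) ++ winv (pref l y)).
  by apply: IH => c' Hc'; apply: H; rewrite inE Hc' orbT.
have Hu : weq eG (Phi (Fcomp l c.1.1)) (letter v).
  apply: weq_trans (IH' _) _; rewrite (H c (mem_head _ _)).
  by apply: vconj; [exact: all_pref|left].
rewrite /Phi wsubst_comp -/Phi.
have -> : pref (c :: l) y = if y \in c.1.2 then (v, c.2) :: pref l y else pref l y.
  by rewrite /pref /=; case: (y \in c.1.2).
case: c H Hu => [[u E] s] H Hu /=.
have wnil : forall g : L -> word G, wsubst g [::] = [::] by [].
rewrite /pc /=; case: (y \in E) => /=; last first.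
  by rewrite /letter wsubst_cons wnil cats0; exact: IH'.
rewrite !wsubst_cons wnil cats0 winv_cons /=.
have Hs : forall b, weq eG (if b then winv (Phi (Fcomp l u)) else Phi (Fcomp l u))
                          [:: (v, b)].
  by case=> //; have := weq_winv eGsym Hu.
have -> : (v, s) :: pref l y ++ (phi y, false) :: winv (pref l y) ++ [:: (v, ~~ s)]
  = [:: (v, s)] ++ ((pref l y ++ letter (phi y) ++ winv (pref l y)) ++ [:: (v, ~~ s)]).
  by rewrite /letter /= -!catA.
apply: weq_cat; first exact: Hs.
apply: weq_cat; [exact: IH'|exact: Hs].
Qed.

End Comp.


Section VW.
Variables (G : finType) (eG : rel G) (v : G).

Definition Rw a b : word G := nseq (a - b) (v, false) ++ nseq (b - a) (v, true).

Lemma Rw_F a b : weq eG ((v, false) :: Rw a b) (Rw a.+1 b).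
Proof.
rewrite /Rw; case: (leqP b a) => ba.
  have -> : b - a = 0 by lia.
  have -> : b - a.+1 = 0 by lia.
  have -> : a.+1 - b = (a - b).+1 by lia.
  exact: weq_refl.
have -> : a - b = 0 by lia.
have -> : a.+1 - b = 0 by lia.
have -> : b - a = (b - a.+1).+1 by lia.
exact: (weq_cancel_mid [::] _ v false).
Qed.

Lemma Rw_T a b : weq eG ((v, true) :: Rw a b) (Rw a b.+1).
Proof.
rewrite /Rw; case: (leqP a b) => ab.
  have -> : a - b = 0 by lia.
  have -> : a - b.+1 = 0 by lia.
  have -> : b.+1 - a = (b - a).+1 by lia.
  exact: weq_refl.
have -> : b - a = 0 by lia.
have -> : b.+1 - a = 0 by lia.
have -> : a - b = (a - b.+1).+1 by lia.
exact: (weq_cancel_mid [::] _ v true).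
Qed.

Lemma vword (p : word G) : all (fun q => q.1 == v) p ->
  weq eG p (Rw (count (fun q => ~~ q.2) p) (count (fun q => q.2) p)).
Proof.
elim: p => [|[x b] p IH] /=; first by move=> _; exact: weq_refl.
case/andP=> /eqP -> /IH Hp.
have := weq_ctx [:: (v, b)] [::] Hp; rewrite !cats0 /= => H; apply: weq_trans H _.
case: b => /=; rewrite ?add0n ?add1n; [exact: Rw_T|exact: Rw_F].
Qed.

Hypothesis eGsym : symmetric eG.

Lemma pconj_img (B : {set G}) a (p : word G) : all (fun q => q.1 == v) p ->
  (if (a == v) || eG v a then (a \notin B) = true
   else count (fun q => ~~ q.2) p = count (fun q => q.2) p + (a \in B)) ->
  weq eG (pconj v B a) (p ++ letter a ++ winv p).
Proof.
move=> Hp; case: ifP => ast.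
  move=> aB; rewrite /pconj (negbTE aB); apply: weq_sym; apply: (vconj (v:=v)) => //.
  by case/orP: ast => [/eqP aeq|eva]; [left|right].
move=> cnt.
apply: weq_sym; apply: weq_trans (weq_cat (vword Hp) (weq_cat (weq_refl _ _) (weq_winv eGsym (vword Hp)))) _.
rewrite cnt /Rw.
have -> : count (fun q : G * bool => q.2) p - (count (fun q => q.2) p + (a \in B)) = 0 by lia.
rewrite /pconj; case: (a \in B) => /=.
  rewrite addn1 subSn // subnn /= /letter /winv /=; exact: weq_refl.
rewrite addn0 subnn /= /letter; exact: weq_refl.
Qed.

End VW.


Section Conn.
Variables (T : finType).

Lemma connect_ind' (r : rel T) (P : T -> Prop) x : P x ->
  (forall a b, connect r x a -> P a -> r a b -> P b) ->
  forall y, connect r x y -> P y.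
Proof.
move=> Px step.
suff H : forall p a, connect r x a -> P a -> path r a p -> P (last a p).
  by move=> y /connectP [p pth ->]; exact: H (connect0 _ _) Px pth.
elim=> [|b p IH] a cxa Pa //= /andP [rab pth].
apply: IH pth; [exact: connect_trans cxa (connect1 rab)|exact: step cxa Pa rab].
Qed.
End Conn.

Section Graph.
Variables (T : finType) (e : rel T).
Hypothesis esym : symmetric e.
Implicit Types (S : {set T}) (x y z a b c d w : T).

Definition Rs (S : {set T}) := [rel a b | [&& e a b, a \in S & b \in S]].

Lemma Rs_sym S : symmetric (Rs S).
Proof. by move=> a b /=; rewrite esym; case: (a \in S); case: (b \in S); rewrite ?andbF ?andbT. Qed.

Lemma connect_Rs_sym S a b : connect (Rs S) a b = connect (Rs S) b a.
Proof. exact: (sym_connect_sym (Rs_sym S)). Qed.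

Lemma in_icomp S x y : (y \in icomp e S x) = (y \in S) && connect (Rs S) x y.
Proof. by rewrite inE. Qed.

Lemma icomp_self S x : x \in S -> x \in icomp e S x.
Proof. by move=> xS; rewrite in_icomp xS connect0. Qed.

Lemma icomp_sub S x y : y \in icomp e S x -> y \in S.
Proof. by rewrite in_icomp => /andP []. Qed.

Lemma connect_Rs_e S a b : connect (Rs S) a b -> connect e a b.
Proof.
apply: connect_sub => c d /= /and3P [ecd _ _]; exact: connect1.
Qed.

Lemma icomp_trans S x y z : x \in S -> y \in icomp e S x -> z \in icomp e S y ->
  z \in icomp e S x.
Proof.
move=> xS; rewrite !in_icomp => /andP [yS cxy] /andP [zS cyz].
by rewrite zS (connect_trans cxy cyz).
Qed.

Lemma icomp_symm S x y : x \in S -> y \in icomp e S x -> x \in icomp e S y.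
Proof.
move=> xS; rewrite !in_icomp => /andP [yS cxy].
by rewrite xS connect_Rs_sym.
Qed.

Lemma icomp_edge S x y z : y \in icomp e S x -> e y z -> z \in S -> z \in icomp e S x.
Proof.
rewrite !in_icomp => /andP [yS cxy] eyz zS.
rewrite zS /=; apply: connect_trans cxy (connect1 _); by rewrite /= eyz yS zS.
Qed.

Lemma connect_transfer S (S' : {set T}) x y : connect (Rs S) x y ->
  (forall w, connect (Rs S) x w -> w \in S -> w \in S') -> connect (Rs S') x y.
Proof.
move=> cxy H.
apply: (connect_ind' (P := fun w => connect (Rs S') x w)) cxy; first exact: connect0.
move=> a b cxa cxa' /= /and3P [eab aS bS].
apply: connect_trans cxa' (connect1 _) => /=.
rewrite eab (H _ cxa aS) /=; apply: (H _ _ bS).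
apply: connect_trans cxa (connect1 _); by rewrite /= eab aS bS.
Qed.

Lemma exit_lemma S x z : x \in S -> connect e x z -> z \notin icomp e S x ->
  exists c d, [/\ c \in icomp e S x, d \notin S & e c d].
Proof.
move=> xS cxz zn.
case: (boolP [exists c, exists d, [&& c \in icomp e S x, d \notin S & e c d]]).
  by case/existsP=> c /existsP [d /and3P [H1 H2 H3]]; exists c, d.
move=> /negP H; exfalso; apply/negP: zn; rewrite negbK.
apply: (connect_ind' (P := fun w => w \in icomp e S x)) cxz; first exact: icomp_self.
move=> a b _ aC eab.
case: (boolP (b \in S)) => bS; first exact: icomp_edge aC eab bS.
by exfalso; apply: H; apply/existsP; exists a; apply/existsP; exists b; rewrite aC bS eab.
Qed.

End Graph.


Section Core.
Variables (L G : finType) (eL : rel L) (phi : L -> G) (v : G).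
Hypothesis esym : symmetric eL.
Hypothesis dstar : forall u u' t, phi u = v -> phi u' = v ->
  t \in star eL u -> t \in star eL u' -> u = u'.
Implicit Types (u w x y z t : L).

Definition Cc u w := icomp eL (~: star eL u) w.
Definition Dz z := [set y | [forall u, (phi u == v) ==> (y \in icomp eL (~: star eL u) z)]].
Definition Ustar z := [set u | (phi u == v) &&
   [forall u', ((phi u' == v) && (u' != u)) ==> (u \in Cc u' z)]].
Definition Eset z u := [set w | [&& w \notin star eL u, connect eL z w & w \notin Cc u z]].
Definition out y := forall u, phi u = v -> y \notin star eL u.

Lemma in_Eset z u w : (w \in Eset z u) = [&& w \notin star eL u, connect eL z w & w \notin Cc u z].
Proof. by rewrite /Eset in_set. Qed.

Lemma in_Ustar z u : (u \in Ustar z) = (phi u == v) &&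
   [forall u', ((phi u' == v) && (u' != u)) ==> (u \in Cc u' z)].
Proof. by rewrite /Ustar in_set. Qed.

Lemma in_Dz z y : (y \in Dz z) = [forall u, (phi u == v) ==> (y \in Cc u z)].
Proof. by rewrite /Dz in_set. Qed.

Lemma star_self u : u \in star eL u.
Proof. by rewrite /star !inE eqxx. Qed.

Lemma star_nb u w : eL u w -> w \in star eL u.
Proof. by rewrite /star !inE => ->; rewrite orbT. Qed.

Lemma starA u u' : phi u = v -> phi u' = v -> u != u' -> {subset star eL u <= Cc u' u}.
Proof.
move=> pu pu' neq t tu.
have notin : forall s, s \in star eL u -> s \in ~: star eL u'.
  move=> s su; rewrite inE; apply/negP => su'.
  by move/eqP: neq; apply; apply: (dstar pu pu' su su').
rewrite /Cc in_icomp notin //=.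
move: tu; rewrite {1}/star !inE => /orP [/eqP ->|eut]; first exact: connect0.
have h1 := notin _ (star_self u); have h2 := notin _ (star_nb eut).
apply: connect1; by rewrite /= eut h1 h2.
Qed.

Lemma Cc_out u w y : y \in Cc u w -> y \notin star eL u.
Proof. by move/icomp_sub; rewrite inE. Qed.

Section Fixz.
Variable z : L.
Hypothesis zout : out z.

Lemma z_in u : phi u = v -> z \in ~: star eL u.
Proof. by move=> pu; rewrite inE zout. Qed.

Lemma Cc_z_sym u y : phi u = v -> y \in Cc u z -> z \in Cc u y.
Proof. move=> pu; exact: icomp_symm (z_in pu). Qed.

Lemma uniq_sep y u1 u2 : out y -> u1 \in Ustar z -> u2 \in Ustar z ->
  y \notin Cc u1 z -> y \notin Cc u2 z -> connect eL z y -> u1 = u2.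
Proof.
move=> yout U1 U2 n1 n2 czy.
move: U1 U2; rewrite !inE => /andP [/eqP p1 /forallP H1] /andP [/eqP p2 /forallP H2].
apply/eqP; apply/negPn/negP => neq.
have u2C1 : u2 \in Cc u1 z by have := H2 u1; rewrite p1 eqxx neq /= => ->.
have u1C2 : u1 \in Cc u2 z by have := H1 u2; rewrite p2 eqxx eq_sym neq /= => ->.
have yS1 : y \in ~: star eL u1 by rewrite inE yout.
have yS2 : y \in ~: star eL u2 by rewrite inE yout.
have zn : z \notin Cc u1 y.
  apply/negP => /(icomp_symm esym yS1) H; by rewrite H in n1.
have cyz : connect eL y z by rewrite (sym_connect_sym esym).
have [c [d [cC dS ecd]]] := exit_lemma yS1 cyz zn.
have avoid : forall w, w \in Cc u1 y -> w \notin star eL u2.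
  move=> w wC; apply/negP => w2.
  have w12 : w \in Cc u1 u2 by apply: starA => //; rewrite eq_sym.
  have n21 : u2 != u1 by rewrite eq_sym.
  have u2S1 : u2 \in ~: star eL u1 by apply: (icomp_sub (starA p2 p1 n21 (star_self u2))).
  have u2y : u2 \in Cc u1 y.
    exact: (icomp_trans yS1 wC (icomp_symm esym u2S1 w12)).
  have : y \in Cc u1 z.
    exact: (icomp_trans (z_in p1) u2C1 (icomp_symm esym yS1 u2y)).
  by rewrite (negbTE n1).
have cyc : connect (Rs eL (~: star eL u2)) y c.
  apply: connect_transfer (_ : connect (Rs eL (~: star eL u1)) y c) _.
    by move: cC; rewrite /Cc in_icomp => /andP [].
  move=> w cyw wS; rewrite inE; apply: avoid; by rewrite /Cc in_icomp wS.
have cS2 : c \in ~: star eL u2 by rewrite inE avoid.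
have dC : d \in Cc u2 z.
  have dst : d \in star eL u1 by move: dS; rewrite inE negbK.
  have d21 : d \in Cc u2 u1 by exact: starA.
  exact: icomp_trans (z_in p2) u1C2 d21.
have : y \in Cc u2 z.
  have cC2 : c \in Cc u2 z.
    apply: icomp_edge dC _ cS2; by rewrite esym.
  rewrite /Cc in_icomp yS2 /=.
  move: cC2; rewrite /Cc in_icomp => /andP [_ czc].
  apply: connect_trans czc _; by rewrite connect_Rs_sym.
by rewrite (negbTE n2).
Qed.

Lemma exist_sep y : out y -> connect eL z y -> y \notin Dz z ->
  exists2 u, u \in Ustar z & y \in Eset z u.
Proof.
move=> yout czy; rewrite in_Dz negb_forall => /existsP [u0].
rewrite negb_imply => Pu0.
pose P u := (phi u == v) && (y \notin Cc u z).
have [u Pu maxu] := @arg_maxnP L u0 P (fun u => #|Cc u y|) Pu0.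
case/andP: Pu => /eqP pu nyu.
have yS : y \in ~: star eL u by rewrite inE yout.
exists u; last by rewrite in_Eset (yout _ pu) czy nyu.
rewrite in_Ustar pu eqxx /=; apply/forallP => u'; apply/implyP => /andP [/eqP pu' neq].
apply/negPn/negP => nuz.
have neq' : u != u' by rewrite eq_sym.
have yS' : y \in ~: star eL u' by rewrite inE yout.
have zn : z \notin Cc u y.
  by apply/negP => /(icomp_symm esym yS) H; rewrite H in nyu.
have cyz : connect eL y z by rewrite (sym_connect_sym esym).
have [c [d [cC dS ecd]]] := exit_lemma yS cyz zn.
have dst : d \in star eL u by move: dS; rewrite inE negbK.
have dCu : d \in Cc u' u by exact: starA.
have dS' : d \in ~: star eL u' := icomp_sub dCu.
have uS' : u \in ~: star eL u' := icomp_sub (starA pu pu' neq' (star_self u)).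
case: (boolP [forall w in Cc u y, w \notin star eL u']) => [/forall_inP avoid|].
  have sub : forall w, w \in Cc u y -> w \in Cc u' y.
    move=> w; rewrite /Cc !in_icomp => /andP [wS cyw].
    rewrite inE avoid /=; last by rewrite /Cc in_icomp wS.
    apply: connect_transfer cyw _ => w' cyw' w'S; rewrite inE avoid //.
    by rewrite /Cc in_icomp w'S.
  have cC' := sub _ cC.
  have dC' : d \in Cc u' y := icomp_edge cC' ecd dS'.
  have uC' : u \in Cc u' y := icomp_trans yS' dC' (icomp_symm esym uS' dCu).
  have nyz' : y \notin Cc u' z.
    apply/negP => yC; move/negP: nuz; apply; exact: icomp_trans (z_in pu') yC uC'.
  have := maxu u'; rewrite /P pu' eqxx nyz' => /(_ isT) le.
  have prop : Cc u y \proper Cc u' y.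
    apply/properP; split; first by apply/subsetP.
    by exists u => //; apply/negP => /Cc_out; rewrite star_self.
  have le' : #|Cc u' y| <= #|Cc u y| := le.
  by have := proper_card prop; rewrite ltnNge le'.
move=> /forall_inPn [w wC]; rewrite negbK => wst.
have neq'' : u' != u by [].
have wCu : w \in Cc u u' by exact: starA.
have u'S : u' \in ~: star eL u := icomp_sub (starA pu' pu neq'' (star_self u')).
have u'Cy : u' \in Cc u y := icomp_trans yS wC (icomp_symm esym u'S wCu).
have avoidz : forall w', w' \in Cc u z -> w' \notin star eL u'.
  move=> w' w'C; apply/negP => w'st.
  have w'Cu : w' \in Cc u u' by exact: starA.
  have u'Cz : u' \in Cc u z := icomp_trans (z_in pu) w'C (icomp_symm esym u'S w'Cu).
  have : y \in Cc u z := icomp_trans (z_in pu) u'Cz (icomp_symm esym yS u'Cy).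
  by rewrite (negbTE nyu).
have czu : connect eL z u.
  apply: connect_trans czy _.
  have cyc : connect eL y c.
    by apply: (connect_Rs_e (S := ~: star eL u)); move: cC; rewrite /Cc in_icomp => /andP [].
  apply: connect_trans cyc _; apply: connect_trans (connect1 ecd) _.
  move: dst; rewrite /star !inE => /orP [/eqP ->|eud]; first exact: connect0.
  by apply: connect1; rewrite esym.
have un : u \notin Cc u z by apply/negP => /Cc_out; rewrite star_self.
have [c' [d' [c'C d'S ec'd']]] := exit_lemma (z_in pu) czu un.
have d'st : d' \in star eL u by move: d'S; rewrite inE negbK.
have d'Cu : d' \in Cc u' u by exact: starA.
have d'S' : d' \in ~: star eL u' := icomp_sub d'Cu.
have c'C' : c' \in Cc u' z.
  rewrite /Cc in_icomp inE avoidz //=.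
  move: c'C; rewrite /Cc in_icomp => /andP [_ czc'].
  apply: connect_transfer czc' _ => w' czw' w'S; rewrite inE avoidz //.
  by rewrite /Cc in_icomp w'S.
have d'C' : d' \in Cc u' z := icomp_edge c'C' ec'd' d'S'.
have := icomp_trans (z_in pu') d'C' (icomp_symm esym uS' d'Cu); by rewrite (negbTE nuz).
Qed.

Lemma count_lemma y : (exists u0, phi u0 = v) -> out y ->
  (connect eL z y : nat) = (y \in Dz z) + #|[set u in Ustar z | y \in Eset z u]|.
Proof.
move=> [u0 pu0] yout.
case czy: (connect eL z y); last first.
  have -> : y \in Dz z = false.
    apply/negP; rewrite in_Dz => /forallP /(_ u0); rewrite pu0 eqxx /=.
    rewrite /Cc in_icomp => /andP [_ /connect_Rs_e]; by rewrite czy.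
  rewrite /= (_ : [set u in Ustar z | y \in Eset z u] = set0) ?cards0 //.
  by apply/setP => u; rewrite in_set in_set0 in_Eset czy /= !andbF.
case yD: (y \in Dz z).
  rewrite (_ : [set u in Ustar z | y \in Eset z u] = set0) ?cards0 //.
  apply/setP => u; rewrite in_set in_set0 in_Ustar in_Eset.
  apply/negP => /andP [/andP [/eqP pu _] /and3P [_ _ n]].
  move: yD; rewrite in_Dz => /forallP /(_ u); rewrite pu eqxx /= => yC.
  by rewrite yC in n.
have [u uU uE] := exist_sep yout czy (negbT yD).
rewrite (_ : [set u in Ustar z | y \in Eset z u] = [set u]) ?cards1 //.
apply/setP => u'; rewrite in_set in_set1; apply/idP/idP; last by move/eqP ->; rewrite uU uE.
case/andP=> u'U u'E; apply/eqP.
move: uE u'E; rewrite !in_Eset => /and3P [_ _ n1] /and3P [_ _ n2].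
exact: (uniq_sep yout u'U uU n2 n1 czy).
Qed.

End Fixz.
Lemma Dz_out w t : t \in Dz w -> out t.
Proof.
rewrite in_Dz => /forallP H u pu; have := H u; rewrite pu eqxx /=; exact: Cc_out.
Qed.

Lemma Dz_self w : out w -> w \in Dz w.
Proof.
move=> wout; rewrite in_Dz; apply/forallP => u; apply/implyP => /eqP pu.
by apply: icomp_self; rewrite inE wout.
Qed.

Lemma Dz_eq w t : out w -> t \in Dz w -> Dz t = Dz w.
Proof.
move=> wout tD; apply/setP => s; rewrite !in_Dz.
move: tD; rewrite in_Dz => /forallP tD.
apply/forallP/forallP => H u; apply/implyP => pu; have := H u; have := tD u;
  rewrite pu /= => tC sC.
- exact: icomp_trans (z_in wout (eqP pu)) tC sC.
- have tS := icomp_sub tC.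
  exact: icomp_trans tS (icomp_symm esym (z_in wout (eqP pu)) tC) sC.
Qed.

Section Transport.
Variable f : L -> L.
Hypothesis finj : injective f.
Hypothesis fe : forall a b, eL (f a) (f b) = eL a b.

Lemma star_f u w : (f w \in star eL (f u)) = (w \in star eL u).
Proof. by rewrite /star !inE (inj_eq finj) fe. Qed.

Lemma Cc_f u a w : w \in Cc u a -> f w \in Cc (f u) (f a).
Proof.
rewrite /Cc !in_icomp !in_setC star_f => /andP [wS caw]; rewrite wS /=.
apply: (connect_ind' (P := fun t => connect (Rs eL (~: star eL (f u))) (f a) (f t))) caw.
  exact: connect0.
move=> b c _ H /= /and3P [ebc bS cS].
apply: connect_trans H (connect1 _).
by move: bS cS; rewrite /= fe ebc !in_setC !star_f => -> ->.
Qed.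
End Transport.

End Core.


Section Main.
Variables (L G : finType) (eL : rel L) (eG : rel G) (phi : L -> G) (v : G) (x : L).
Hypothesis eLsym : symmetric eL.
Hypothesis eGsym : symmetric eG.
Hypothesis eGirr : irreflexive eG.
Hypothesis surj : forall y, exists x, phi x = y.
Hypothesis edge : forall u w, eL u w -> eG (phi u) (phi w).
Hypothesis locinj : forall u, {in [pred w | eL u w] &, injective phi}.
Hypothesis lift : forall u y, eG (phi u) y -> exists w, eL u w /\ phi w = y.
Hypothesis reg : forall u u', phi u = phi u' ->
    exists mu : L -> L, [/\ bijective mu, forall a b, eL (mu a) (mu b) = eL a b,
                           forall a, phi (mu a) = phi a & mu u = u'].
Hypothesis xout : out eL phi v x.

Lemma dstar : forall u u' t, phi u = v -> phi u' = v ->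
  t \in star eL u -> t \in star eL u' -> u = u'.
Proof.
move=> u u' t pu pu'; rewrite /star !inE.
case/orP=> [/eqP tu|eut]; case/orP=> [/eqP tu'|eu't].
- by rewrite -tu -tu'.
- have := edge eu't; by rewrite pu' tu pu eGirr.
- have := edge eut; by rewrite pu tu' pu' eGirr.
- apply: (locinj (u := t)); rewrite ?inE 1?eLsym //; by rewrite pu pu'.
Qed.

Lemma out_iff y : out eL phi v y <-> ~~ ((phi y == v) || eG v (phi y)).
Proof.
split=> [yo|H u pu].
  apply/negP => /orP [/eqP py|evy].
    by have := yo y py; rewrite star_self.
  have := lift (u := y) (y := v); rewrite eGsym evy => /(_ isT) [w [eyw pw]].
  by have := yo w pw; rewrite /star !inE eLsym eyw orbT.
apply/negP; rewrite /star !inE => /orP [/eqP yu|euy].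
  by move: H; rewrite yu pu eqxx.
by move: H; have := edge euy; rewrite pu => ->; rewrite orbT.
Qed.

Definition bB := barB eL phi v x.
Definition Wset := [set y | phi y \in bB].
Definition Cls := [set Dz eL phi v y | y in Wset].
Definition rep (Q : {set L}) := odflt x [pick w in Q].
Definition u0 := odflt x [pick u | phi u == v].

Lemma u0P : phi u0 = v.
Proof.
rewrite /u0; case: pickP => [u /eqP //|none].
by have [w pw] := surj v; have := none w; rewrite pw eqxx.
Qed.

Lemma fib_ex : exists u, phi u = v.
Proof. exists u0; exact: u0P. Qed.

Lemma Wset_out y : y \in Wset -> out eL phi v y.
Proof.
rewrite inE => /imsetP [d dD pyd].
apply/out_iff; rewrite pyd; apply/out_iff; exact: Dz_out dD.
Qed.

Lemma bB_notst a : a \in bB -> ~~ ((a == v) || eG v a).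
Proof. by case/imsetP=> d dD ->; apply/out_iff; exact: Dz_out dD. Qed.

Lemma W_closure y s : y \in Wset -> s \in Dz eL phi v y -> s \in Wset.
Proof.
rewrite inE => /imsetP [d dD pyd] sD.
have [mu [[nu muK nuK] emu pmu mud]] := reg (esym pyd).
have nuinj : injective nu := can_inj nuK.
have enu : forall a b, eL (nu a) (nu b) = eL a b.
  by move=> a b; rewrite -emu !nuK.
have pnu : forall a, phi (nu a) = phi a by move=> a; rewrite -pmu nuK.
have nud : nu y = d by rewrite -mud muK.
rewrite inE -(pnu s); apply/imsetP; exists (nu s) => //.
rewrite in_Dz; apply/forallP => u; apply/implyP => /eqP pu.
move: dD sD; rewrite !in_Dz => /forallP /(_ u); rewrite pu eqxx /= => dC.
move/forallP => /(_ (mu u)); rewrite pmu pu eqxx /= => sC.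
have := Cc_f nuinj enu sC; rewrite muK nud => sC'.
exact: icomp_trans (z_in xout pu) dC sC'.
Qed.

Lemma rep_ok Q : Q \in Cls -> Dz eL phi v (rep Q) = Q /\ out eL phi v (rep Q).
Proof.
case/imsetP=> w wW ->; have wo := Wset_out wW.
rewrite /rep; case: pickP => [t tQ|none] /=.
  split; [apply: (Dz_eq eLsym wo tQ)|exact: Dz_out tQ].
by have := none w; rewrite Dz_self.
Qed.

Lemma sum_ind y : out eL phi v y ->
  \sum_(Q in Cls) (y \in Q : nat) = (y \in Wset).
Proof.
move=> yo; case: (boolP (y \in Wset)) => yW.
  have Q0 : Dz eL phi v y \in Cls by apply: imset_f.
  rewrite (bigD1 _ Q0) /= Dz_self // big1 // => Q /andP [QC neq].
  move: QC neq; case/imsetP=> w wW -> neq.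
  case: (boolP (y \in Dz eL phi v w)) => //= yQ; exfalso.
  by move: neq; rewrite (Dz_eq eLsym (Wset_out wW) yQ) eqxx.
rewrite big1 // => Q; case/imsetP=> w wW ->.
case: (boolP (y \in Dz eL phi v w)) => //= yQ; exfalso.
have := W_closure wW yQ; by rewrite (negbTE yW).
Qed.

Lemma count_enum_card (A : {set L}) (P : pred L) :
  count P (enum A) = #|[set u in A | P u]|.
Proof.
rewrite -sum1_count big_enum_cond sum1_card; apply: eq_card => u.
by rewrite !inE.
Qed.

Definition Kset z := [set w | connect eL z w].
Definition items (Q : {set L}) : seq (L * {set L} * bool) :=
  (u0, Kset (rep Q) :\: star eL u0, false) ::
  map (fun u => (u, Eset eL (rep Q) u, true)) (enum (Ustar eL phi v (rep Q))).
Definition lst := flatten (map items (enum Cls)).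

Lemma lst_valid c : c \in lst -> valid eL phi v c.
Proof.
case/flattenP=> s /mapP [Q QC ->]; rewrite inE => /orP [/eqP ->|].
  split=> /=; first exact: u0P.
    by move=> a; rewrite in_setD => /andP [].
  move=> a b; rewrite !in_setD !inE => /andP [_ ca] eab.
  by rewrite (connect_trans ca (connect1 eab)) andbT negbK.
case/mapP=> u; rewrite mem_enum => uU ->.
move: (uU); rewrite in_Ustar => /andP [/eqP pu _].
split=> //=.
  by move=> a; rewrite in_Eset => /andP [].
move=> a b; rewrite !in_Eset => /and3P [ast ca naC] eab.
apply: contraR => bst; rewrite bst (connect_trans ca (connect1 eab)) /=.
apply/negP => bC; move/negP: naC; apply.
apply: icomp_edge bC _ _; [by rewrite eLsym|by rewrite in_setC].
Qed.

Lemma cntF y : count (fun q : G * bool => ~~ q.2) (pref v lst y) =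
  count (fun c : L * {set L} * bool => (y \in c.1.2) && ~~ c.2) lst.
Proof. by rewrite /pref count_map count_filter; apply: eq_count => c; rewrite /= andbC. Qed.

Lemma cntT y : count (fun q : G * bool => q.2) (pref v lst y) =
  count (fun c : L * {set L} * bool => (y \in c.1.2) && c.2) lst.
Proof. by rewrite /pref count_map count_filter; apply: eq_count => c; rewrite /= andbC. Qed.

Lemma count_items y : out eL phi v y ->
  count (fun c : L * {set L} * bool => (y \in c.1.2) && ~~ c.2) lst =
  count (fun c : L * {set L} * bool => (y \in c.1.2) && c.2) lst + (y \in Wset).
Proof.
move=> yo; rewrite !count_flatten -!map_comp !sumnE !big_map !big_enum /=.
rewrite -sum_ind // -big_split /=; apply: eq_bigr => Q QC.
have [rD ro] := rep_ok QC.
rewrite /items /= count_map.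
have -> : count (preim (fun u => (u, Eset eL (rep Q) u, true))
   (fun c : L * {set L} * bool => (y \in c.1.2) && ~~ c.2)) (enum (Ustar eL phi v (rep Q))) = 0.
  by apply/eqP; rewrite -leqn0 leqNgt -has_count; apply/hasP => -[u _ /=]; rewrite andbF.
rewrite count_map andbT andbF add0n addn0.
have -> : count (preim (fun u => (u, Eset eL (rep Q) u, true))
   (fun c : L * {set L} * bool => (y \in c.1.2) && c.2)) (enum (Ustar eL phi v (rep Q))) =
   count (fun u => y \in Eset eL (rep Q) u) (enum (Ustar eL phi v (rep Q))).
  by apply: eq_count => u /=; rewrite andbT.
rewrite count_enum_card in_setD (negbTE (yo _ u0P)) /= inE.
rewrite (count_lemma eLsym dstar ro fib_ex yo) rD.
by rewrite addnC.
Qed.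

Lemma main_lift : liftable eL eG phi (pconj v (barB eL phi v x)).
Proof.
exists (Fcomp lst); split.
  by apply: (Fcomp_aut (phi:=phi) (v:=v) eLsym) => c /lst_valid.
move=> y.
have img := Fcomp_img eGsym (l := lst) (fun c cin => let: And3 h _ _ := lst_valid cin in h) y.
apply: weq_trans _ (weq_sym img).
apply: (pconj_img eGsym (all_pref v lst y)).
case: ifP => st.
  apply/negP => /bB_notst; by rewrite st.
have yo : out eL phi v y by apply/out_iff; rewrite st.
by rewrite cntF cntT count_items // inE.
Qed.

End Main.


Theorem proposition3p8 (L G : finType) (eL : rel L) (eG : rel G) (phi : L -> G) :
  simple_graph eL -> simple_graph eG ->
  is_regular_covering eL eG phi ->
  forall (v b : G), b \notin star eG v ->
  let B := icomp eG (~: star eG v) b in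
  forall x : L, phi x \in B ->
  liftable eL eG phi (pconj v (barB eL phi v x)).
Proof.
move=> [eLsym eLirr] [eGsym eGirr] [[surj edge locinj lift] reg] v b bn B x xB.
have xout : out eL phi v x.
  apply/(out_iff v eLsym eGsym edge lift).
  have := icomp_sub xB; by rewrite in_setC /star !inE.
exact: (main_lift eLsym eGsym eGirr surj edge locinj lift reg xout).
Qed.
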